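(* Let $H$ be a finite-dimensional Hopf algebra over a field $\Bbbk$ (algebraically closed of characteristic zero) and $A$ a Hopf subalgebra of $H$. Suppose $H=A\oplus C$ as coalgebras for some subcoalgebra $C$ of $H$. Then $H$ and $A$ have the same distinguished group-like element.
   Context: The distinguished group-like element of a finite-dimensional Hopf algebra $H$ is the $a\in G(H)$ with $\lambda(h_2)h_1=\lambda(h)\,a$ for all $h\in H$, where $\lambda$ is a nonzero right integral of $H^*$. *)

(* Defs.v *)
(* Finite-dimensional Hopf algebras encoded by structure
   constants with respect to a fixed basis e_0, ..., e_(n-1).
   Elements of H are row vectors 'rV[F]_n (coordinates in the basis);
   elements of H (x) H are matrices T : 'M[F]_n, T i j being the coefficient
   of e_i (x) e_j; linear functionals on H are column vectors 'cV[F]_n;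
   subspaces of H are row spaces of matrices 'M[F]_n (mxalgebra, %MS). *)
From HB Require Import structures.
From mathcomp Require Import all_boot all_order all_algebra.
Set Implicit Arguments. Unset Strict Implicit. Unset Printing Implicit Defensive.
Import GRing.Theory.
Local Open Scope ring_scope.

Section Hopf.
Variables (F : fieldType) (n : nat).

(* Structure constants: e_i e_j = mulc i j, 1 = unitH, Delta(e_i) = comulc i,
   eps(x) = x *m counitH, S(x) = x *m antipH. *)
Record HopfData := {
  mulc : 'I_n -> 'I_n -> 'rV[F]_n;
  unitH : 'rV[F]_n;
  comulc : 'I_n -> 'M[F]_n;
  counitH : 'cV[F]_n;
  antipH : 'M[F]_n }.

Variable H : HopfData.

Definition ebasis (i : 'I_n) : 'rV[F]_n := delta_mx 0 i.
Definition hmul (x y : 'rV[F]_n) : 'rV[F]_n :=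
  \sum_i \sum_j (x 0 i * y 0 j) *: mulc H i j.
Definition comul (x : 'rV[F]_n) : 'M[F]_n := \sum_i x 0 i *: comulc H i.
Definition ev (f : 'cV[F]_n) (x : 'rV[F]_n) : F := (x *m f) 0 0.
Definition counit (x : 'rV[F]_n) : F := ev (counitH H) x.
Definition antipode (x : 'rV[F]_n) : 'rV[F]_n := x *m antipH H.
Definition tens (x y : 'rV[F]_n) : 'M[F]_n := x^T *m y.
(* product in the algebra H (x) H *)
Definition tmul (T U : 'M[F]_n) : 'M[F]_n :=
  \matrix_(a, b) \sum_i \sum_j \sum_k \sum_l
     (T i j * U k l * (mulc H i k 0 a * mulc H j l 0 b)).
(* m o (f (x) g) applied to a tensor *)
Definition mulmap (f g : 'rV[F]_n -> 'rV[F]_n) (T : 'M[F]_n) : 'rV[F]_n :=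
  \sum_i \sum_j T i j *: hmul (f (ebasis i)) (g (ebasis j)).
(* coordinates of (Delta (x) id) T and (id (x) Delta) T in H (x) H (x) H *)
Definition coass_l (T : 'M[F]_n) (a b c : 'I_n) : F :=
  \sum_j T j c * comulc H j a b.
Definition coass_r (T : 'M[F]_n) (a b c : 'I_n) : F :=
  \sum_j T a j * comulc H j b c.

Definition is_hopf : Prop :=
  (forall x y z, hmul (hmul x y) z = hmul x (hmul y z)) /\
  (forall x, hmul (unitH H) x = x /\ hmul x (unitH H) = x) /\
  (forall x a b c, coass_l (comul x) a b c = coass_r (comul x) a b c) /\
  (forall x, (counitH H)^T *m comul x = x /\ (comul x *m counitH H)^T = x) /\
  (forall x y, comul (hmul x y) = tmul (comul x) (comul y)) /\
  comul (unitH H) = tens (unitH H) (unitH H) /\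
  (forall x y, counit (hmul x y) = counit x * counit y) /\
  counit (unitH H) = 1 /\
  (forall x, mulmap antipode id (comul x) = counit x *: unitH H /\
             mulmap id antipode (comul x) = counit x *: unitH H).

(* T lies in V (x) W (span of the v (x) w, v a row of V, w a row of W) *)
Definition in_tensor (V W : 'M[F]_n) (T : 'M[F]_n) : Prop :=
  exists X : 'M[F]_n, T = V^T *m X *m W.

Definition subcoalgebra (C : 'M[F]_n) : Prop :=
  forall x, (x <= C)%MS -> in_tensor C C (comul x).

Definition hopf_subalgebra (A : 'M[F]_n) : Prop :=
  (unitH H <= A)%MS /\
  (forall x y, (x <= A)%MS -> (y <= A)%MS -> (hmul x y <= A)%MS) /\
  subcoalgebra A /\
  (forall x, (x <= A)%MS -> (antipode x <= A)%MS).

(* Notions relative to a Hopf subalgebra V of H (V = 1%:M gives H itself).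
   Functionals on V are represented by functionals on H, only their values
   on V matter (every functional on V extends to H). *)
Definition grouplike (V : 'M[F]_n) (g : 'rV[F]_n) : Prop :=
  (g <= V)%MS /\ g != 0 /\ comul g = tens g g.

(* lambda is a nonzero right integral of V^* : lambda * f = f(1) lambda for
   every f in V^*, the product being convolution. *)
Definition right_integral (V : 'M[F]_n) (lam : 'cV[F]_n) : Prop :=
  (exists2 v, (v <= V)%MS & ev lam v != 0) /\
  (forall (f : 'cV[F]_n) (v : 'rV[F]_n), (v <= V)%MS ->
     (lam^T *m comul v *m f) 0 0 = ev f (unitH H) * ev lam v).

(* a is the distinguished group-like element of V:
   a in G(V) and lambda(h_2) h_1 = lambda(h) a for all h in V. *)
Definition dist_grouplike (V : 'M[F]_n) (a : 'rV[F]_n) : Prop :=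
  grouplike V a /\
  exists lam : 'cV[F]_n, right_integral V lam /\
    forall v, (v <= V)%MS -> (comul v *m lam)^T = ev lam v *: a.

End Hopf.

(* Main.v *)
Require Import Defs.
From HB Require Import structures.
From mathcomp Require Import all_boot all_order all_algebra.
Import GRing.Theory.
Local Open Scope ring_scope.

Section Aux.
Variables (F : fieldType) (n : nat) (H : HopfData F n).

Lemma comulD (x y : 'rV[F]_n) : comul H (x + y) = comul H x + comul H y.
Proof.
rewrite /comul -big_split; apply: eq_bigr => i _; by rewrite mxE scalerDl.
Qed.

Lemma evD (f : 'cV[F]_n) x y : ev f (x + y) = ev f x + ev f y.
Proof. by rewrite /ev mulmxDl mxE. Qed.

Lemma comul_projA (U V W : 'M[F]_n) (v : 'rV[F]_n) :
  (U :&: V = 0)%MS -> in_tensor W W (comul H v) -> (W <= U)%MS ->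
  comul H v *m proj_mx U V = comul H v
     /\ (proj_mx U V)^T *m comul H v = comul H v.
Proof.
move=> d [X ->] hW.
by rewrite -!mulmxA proj_mx_id // !mulmxA -trmx_mul proj_mx_id.
Qed.

Lemma comul_projB (U V W : 'M[F]_n) (v : 'rV[F]_n) :
  (U :&: V = 0)%MS -> in_tensor W W (comul H v) -> (W <= V)%MS ->
  comul H v *m proj_mx U V = 0
     /\ (proj_mx U V)^T *m comul H v = 0.
Proof.
move=> d [X ->] hW.
by rewrite -!mulmxA proj_mx_0 // !mulmx0 !mulmxA -trmx_mul proj_mx_0 // trmx0 !mul0mx.
Qed.

End Aux.
Arguments comul_projA {F n} H {U V W v}.
Arguments comul_projB {F n} H {U V W v}.

Theorem lemma2p4 (F : closedFieldType) (charF : [pchar F] =i pred0)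
  (n : nat) (H : HopfData F n) (hH : is_hopf H)
  (A C : 'M[F]_n) (hA : hopf_subalgebra H A) (hC : subcoalgebra H C)
  (hsum : (A + C == 1%:M)%MS) (hdir : (A :&: C == (0 : 'M[F]_n))%MS) :
  forall a : 'rV[F]_n, dist_grouplike H 1%:M a <-> dist_grouplike H A a.
Proof.
move=> a.
have dAC : (A :&: C = 0)%MS by apply/eqmx0P.
have dCA : (C :&: A = 0)%MS by rewrite capmxC.
have hsub : forall w : 'rV[F]_n, (w <= A + C)%MS.
  move=> w; apply: submx_trans (submx1 w) _; by case/andP: (hsum) => _ ->.
case: hA => h1A [_ [hAco _]].
case: hH => _ [_ [_ [hcounit _]]].
split.
- case=> [[_ [anz aco]] [lam [[[v _ lv] hri] hd]]].
  have lC : forall w, (w <= C)%MS -> ev lam w = 0.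
    move=> w hw.
    have := hri (proj_mx C A *m counitH H) w (submx1 w).
    rewrite [ev (_ *m _) _]/ev (mulmxA (unitH H)) proj_mx_0 // mul0mx [(0 : 'M_1) 0 0]mxE mul0r.
    rewrite mulmxA -(mulmxA lam^T).
    have [-> _] := comul_projA H dCA (hC w hw) (submx_refl C).
    rewrite -mulmxA.
    have [_ E] := hcounit w.
    by rewrite -[comul H w *m _]trmxK E -trmx_mul mxE.
  set vA := v *m proj_mx A C.
  have vAA : (vA <= A)%MS by apply: proj_mx_sub.
  have lvA : ev lam vA != 0.
    have E := add_proj_mx dAC (hsub v).
    rewrite -E evD (lC (v *m proj_mx C A)) ?addr0 in lv; first exact: lv.
    exact: proj_mx_sub.
  have aA : (a <= A)%MS.
    have : (ev lam vA *: a <= A)%MS.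
      rewrite -hd ?submx1 //.
      have [X ->] := hAco vA vAA.
      by rewrite -!mulmxA trmx_mul trmxK submxMl.
    move/(scalemx_sub (ev lam vA)^-1).
    by rewrite scalerA mulVf // scale1r.
  split; first by split.
  exists lam; split; last by move=> w _; apply: hd; rewrite submx1.
  split; first by exists vA.
  by move=> f w _; apply: hri; rewrite submx1.
- case=> [[aA [anz aco]] [lam [[[v vA lv] hri] hd]]].
  set P := proj_mx A C.
  have evA : forall w, (w <= A)%MS -> ev (P *m lam) w = ev lam w.
    by move=> w hw; rewrite /ev mulmxA proj_mx_id.
  have evC : forall w, (w <= C)%MS -> ev (P *m lam) w = 0.
    by move=> w hw; rewrite /ev mulmxA proj_mx_0 // mul0mx mxE.
  split; first by split; rewrite ?submx1.
  exists (P *m lam); split.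
    split; first by exists v; rewrite ?submx1 ?evA.
    move=> f w _.
    rewrite -(add_proj_mx dAC (hsub w)) comulD evD !mulmxDr !mulmxDl mxE mulrDr.
    congr (_ + _).
      have wA : (w *m P <= A)%MS by apply: proj_mx_sub.
      rewrite evA // trmx_mul -(mulmxA lam^T).
      have [_ ->] := comul_projA H dAC (hAco _ wA) (submx_refl A).
      exact: hri.
    have wC : (w *m proj_mx C A <= C)%MS by apply: proj_mx_sub.
    rewrite evC // trmx_mul -(mulmxA lam^T).
    have [_ ->] := comul_projB H dAC (hC _ wC) (submx_refl C).
    by rewrite mulmx0 mul0mx mxE mulr0.
  move=> w _.
  rewrite -(add_proj_mx dAC (hsub w)) comulD evD mulmxDl linearD /= scalerDl.
  congr (_ + _).
    have wA : (w *m P <= A)%MS by apply: proj_mx_sub.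
    rewrite evA // mulmxA.
    have [-> _] := comul_projA H dAC (hAco _ wA) (submx_refl A).
    exact: hd.
  have wC : (w *m proj_mx C A <= C)%MS by apply: proj_mx_sub.
  rewrite evC // mulmxA.
  have [-> _] := comul_projB H dAC (hC _ wC) (submx_refl C).
  by rewrite mul0mx trmx0 scale0r.
Qed.
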